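(* Let $I_0\ge1$ be an integer, let $\alpha_1,\dots,\alpha_{I_0-1}$ be non-negative reals, and let $0\le l<u$. For $x\ge0$ let $\beta^{(x)}$ be the family indexed by $\{1,2,\dots\}\cup\{\omega\}$ with $\beta^{(x)}_i=[i<I_0]\alpha_i+[i=I_0]x$. Then $\kappa_i(\beta^{(u)}_i)-\kappa_i(\beta^{(l)}_i)\le u-l$; explicitly, $$\sqrt{\alpha_1^{2^1}+\sqrt{\alpha_2^{2^2}+\dots+\sqrt{\alpha_{I_0-1}^{2^{I_0-1}}+u^{2^{I_0-1}}}}}-\sqrt{\alpha_1^{2^1}+\sqrt{\alpha_2^{2^2}+\dots+\sqrt{\alpha_{I_0-1}^{2^{I_0-1}}+l^{2^{I_0-1}}}}}\le u-l.$$
   Context: $[P]$ is the Iverson bracket ($1$ if $P$ holds, $0$ otherwise). For a family $(\alpha_i)$ of non-negative reals indexed by $\{1,2,\dots\}\cup\{\omega\}$ (with $n<\omega$ for all positive integers $n$), $\kappa_i(\alpha_i)$ is the limit of the approximants $P_0=\alpha_\omega$, $P_n=\sqrt{\alpha_1^{2^1}+\sqrt{\alpha_2^{2^2}+\dots+\sqrt{\alpha_n^{2^n}+\alpha_\omega^{2^n}}}}$ ($n$ nested roots). *)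

(* Defs.v *)
From Stdlib Require Import Reals.
From Coquelicot Require Import Coquelicot.
Open Scope R_scope.

(* Index set {1,2,...} ∪ {ω}.  [Fin n] stands for the positive integer n
   ([Fin 0] is never used by the definitions below). *)
Inductive idx : Type := Fin (n : nat) | Omega.

(* tail a k m = sqrt(a_k^{2^k} + sqrt(a_{k+1}^{2^{k+1}} + ... +
     sqrt(a_{k+m-1}^{2^{k+m-1}} + a_ω^{2^{k+m-1}})))   (m nested roots);
   tail a k 0 = a_ω^{2^{k-1}}. *)
Fixpoint tail (a : idx -> R) (k m : nat) : R :=
  match m with
  | O => a Omega ^ (2 ^ (k - 1))
  | S m' => sqrt (a (Fin k) ^ (2 ^ k) + tail a (S k) m')
  end.

Definition approx (a : idx -> R) (n : nat) : R := tail a 1 n.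

Definition kappa (a : idx -> R) : R := real (Lim_seq (approx a)).

Definition beta (I0 : nat) (alpha : nat -> R) (x : R) (i : idx) : R :=
  match i with
  | Fin n => (if Nat.ltb n I0 then 1 else 0) * alpha n
             + (if Nat.eqb n I0 then 1 else 0) * x
  | Omega => 0
  end.

(* Main.v *)
Require Import Defs.
From Stdlib Require Import Reals Lra Lia Psatz.
From Coquelicot Require Import Coquelicot.
Open Scope R_scope.

Lemma conc (a b c : R) : 0 <= a -> a <= b -> 0 <= c ->
  sqrt (b + c) - sqrt (a + c) <= sqrt b - sqrt a.
Proof.
  intros Ha Hab Hc.
  pose proof (sqrt_pos (b+c)) as P1. pose proof (sqrt_pos a) as P2.
  pose proof (sqrt_pos b) as P3. pose proof (sqrt_pos (a+c)) as P4.
  pose proof (sqrt_sqrt (b+c) ltac:(lra)) as S1.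
  pose proof (sqrt_sqrt a ltac:(lra)) as S2.
  pose proof (sqrt_sqrt b ltac:(lra)) as S3.
  pose proof (sqrt_sqrt (a+c) ltac:(lra)) as S4.
  set (p := sqrt (b+c)) in *. set (q := sqrt a) in *.
  set (r := sqrt b) in *. set (t := sqrt (a+c)) in *.
  assert (H1 : (p*q)*(p*q) <= (r*t)*(r*t)).
  { replace ((p*q)*(p*q)) with ((p*p)*(q*q)) by ring.
    replace ((r*t)*(r*t)) with ((r*r)*(t*t)) by ring.
    rewrite S1, S2, S3, S4. nra. }
  assert (H2 : p*q <= r*t).
  { destruct (Rle_dec (p*q) (r*t)); auto.
    assert (0 <= r*t) by nra. nra. }
  assert (H3 : (p+q)*(p+q) <= (r+t)*(r+t)) by nra.
  assert (p + q <= r + t) by nra.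
  lra.
Qed.

Lemma key (A X X' s s' : R) : 0 <= A -> 0 <= s' -> s' <= X' -> s' <= s ->
  X <= X' + s - s' ->
  sqrt (A + X) - sqrt (A + X') <= sqrt s - sqrt s'.
Proof.
  intros HA Hs' HX' Hss HX.
  destruct (Rle_dec X X').
  - pose proof (sqrt_le_1_alt (A+X) (A+X') ltac:(lra)).
    pose proof (sqrt_le_1_alt s' s Hss). lra.
  - assert (E1 : sqrt (A + X) - sqrt (A + X') <= sqrt X - sqrt X').
    { pose proof (conc X' X A ltac:(lra) ltac:(lra) HA).
      rewrite (Rplus_comm A X), (Rplus_comm A X'). lra. }
    assert (E2 : sqrt X <= sqrt (X' + (s - s'))).
    { apply sqrt_le_1_alt. lra. }
    assert (E3 : sqrt (X' + (s - s')) - sqrt (s' + (s - s')) <= sqrt X' - sqrt s').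
    { apply conc; lra. }
    replace (s' + (s - s')) with s in E3 by ring. lra.
Qed.

Lemma pow0n (n : nat) : (n <> 0)%nat -> 0 ^ n = 0.
Proof. intros H. destruct n; [lia|]. simpl. ring. Qed.

Lemma pow2_ne0 (n : nat) : (2 ^ n <> 0)%nat.
Proof. apply Nat.pow_nonzero. lia. Qed.

Lemma sqrt_pow2k (x : R) (k : nat) : 0 <= x ->
  sqrt (x ^ (2 ^ S k)) = x ^ (2 ^ k).
Proof.
  intros Hx. rewrite Nat.pow_succ_r', pow_mult.
  replace ((x ^ 2) ^ (2 ^ k)) with ((x ^ (2 ^ k)) ^ 2).
  - apply sqrt_pow2. apply pow_le; auto.
  - rewrite <- !pow_mult. f_equal. lia.
Qed.

Lemma Z (I0 : nat) alpha x : forall m k, (I0 < k)%nat -> tail (beta I0 alpha x) k m = 0.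
Proof.
  induction m; intros k Hk; simpl.
  - apply pow0n. apply pow2_ne0.
  - rewrite IHm; [|lia].
    replace (Nat.ltb k I0) with false by (symmetry; apply Nat.ltb_ge; lia).
    replace (Nat.eqb k I0) with false by (symmetry; apply Nat.eqb_neq; lia).
    rewrite Rmult_0_l, Rmult_0_l, Rplus_0_l, pow0n; [|apply pow2_ne0].
    rewrite Rplus_0_l. apply sqrt_0.
Qed.

Lemma E (I0 : nat) alpha x : forall m k j, (k + m = I0 + 1)%nat ->
  tail (beta I0 alpha x) k (m + j) = tail (beta I0 alpha x) k m.
Proof.
  induction m; intros k j Hk.
  - change (0 + j)%nat with j. rewrite !Z by lia. reflexivity.
  - simpl. rewrite IHm; [reflexivity|lia].
Qed.

Lemma P (I0 : nat) alpha l u :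
  (forall i : nat, (1 <= i)%nat -> (i < I0)%nat -> 0 <= alpha i) ->
  0 <= l -> l < u ->
  forall m k, (1 <= k)%nat -> (k + m = I0)%nat ->
  tail (beta I0 alpha u) k (S m) - tail (beta I0 alpha l) k (S m)
    <= u ^ (2 ^ (k-1)) - l ^ (2 ^ (k-1))
  /\ (forall x, 0 <= x -> x ^ (2 ^ (k-1)) <= tail (beta I0 alpha x) k (S m)).
Proof.
  intros Ha Hl Hlu. induction m; intros k Hk HkI.
  - assert (Hbase : forall x, 0 <= x -> tail (beta I0 alpha x) k 1 = x ^ (2 ^ (k-1))).
    { intros x Hx. simpl.
      replace (Nat.ltb k I0) with false by (symmetry; apply Nat.ltb_ge; lia).
      replace (Nat.eqb k I0) with true by (symmetry; apply Nat.eqb_eq; lia).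
      rewrite pow0n; [|apply pow2_ne0].
      rewrite Rplus_0_r. replace (0 * alpha k + 1 * x) with x by ring.
      replace (2 ^ k)%nat with (2 ^ S (k-1))%nat by (f_equal; lia).
      apply sqrt_pow2k; auto. }
    split.
    + rewrite !Hbase; lra.
    + intros x Hx. rewrite Hbase; lra.
  - destruct (IHm (S k) ltac:(lia) ltac:(lia)) as [IH1 IH2].
    replace (S k - 1)%nat with k in IH1, IH2 by lia.
    assert (Hb : forall x, beta I0 alpha x (Fin k) = alpha k).
    { intros x. simpl.
      replace (Nat.ltb k I0) with true by (symmetry; apply Nat.ltb_lt; lia).
      replace (Nat.eqb k I0) with false by (symmetry; apply Nat.eqb_neq; lia).
      ring. }
    assert (HA : 0 <= alpha k ^ (2 ^ k)).
    { apply pow_le. apply Ha; lia. }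
    assert (Hsq : forall x, 0 <= x -> sqrt (x ^ (2 ^ k)) = x ^ (2 ^ (k-1))).
    { intros x Hx. replace (2 ^ k)%nat with (2 ^ S (k-1))%nat by (f_equal; lia).
      apply sqrt_pow2k; auto. }
    change (tail (beta I0 alpha u) k (S (S m))) with
      (sqrt (beta I0 alpha u (Fin k) ^ (2 ^ k) + tail (beta I0 alpha u) (S k) (S m))).
    change (tail (beta I0 alpha l) k (S (S m))) with
      (sqrt (beta I0 alpha l (Fin k) ^ (2 ^ k) + tail (beta I0 alpha l) (S k) (S m))).
    rewrite !Hb. split.
    + rewrite <- (Hsq u) by lra. rewrite <- (Hsq l) by lra.
      apply key; [exact HA | apply pow_le; lra | apply IH2; lra
                 | apply pow_incr; split; lra | lra].
    + intros x Hx.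
      change (tail (beta I0 alpha x) k (S (S m))) with
        (sqrt (beta I0 alpha x (Fin k) ^ (2 ^ k) + tail (beta I0 alpha x) (S k) (S m))).
      rewrite Hb. rewrite <- (Hsq x Hx). apply sqrt_le_1_alt.
      pose proof (IH2 x Hx). lra.
Qed.

Lemma kappa_eq (I0 : nat) alpha x : (1 <= I0)%nat ->
  kappa (beta I0 alpha x) = tail (beta I0 alpha x) 1 I0.
Proof.
  intros H. unfold kappa.
  rewrite <- (Lim_seq_incr_n _ I0).
  rewrite (Lim_seq_ext _ (fun _ => tail (beta I0 alpha x) 1 I0)).
  - rewrite Lim_seq_const. reflexivity.
  - intros n. unfold approx. rewrite Nat.add_comm. apply E. lia.
Qed.

Theorem lemma5 (I0 : nat) (alpha : nat -> R) (l u : R) :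
  (1 <= I0)%nat ->
  (forall i : nat, (1 <= i)%nat -> (i < I0)%nat -> 0 <= alpha i) ->
  0 <= l -> l < u ->
  kappa (beta I0 alpha u) - kappa (beta I0 alpha l) <= u - l.
Proof.
  intros HI Ha Hl Hlu.
  rewrite !kappa_eq; auto.
  destruct (P I0 alpha l u Ha Hl Hlu (I0 - 1) 1 ltac:(lia) ltac:(lia)) as [H _].
  replace (S (I0 - 1)) with I0 in H by lia.
  simpl in H. lra.
Qed.
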